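(* For every integer $n\ge 0$, $$\Phi^{(1)}[a; b, b'; cq^{-n}; x, y] = \frac{1}{(q/c; q)_n} \sum_{k=0}^n \begin{bmatrix} n \\ k \end{bmatrix} (-c)^{k-n} q^{\binom{n+1-k}{2}} \Phi^{(1)}[a; b, b'; c; xq^k, yq^k]$$ and $$\Phi^{(1)}[a; b, b'; cq^n; x, y] = \sum_{k=0}^n \begin{bmatrix} n \\ k \end{bmatrix} c^k q^{2\binom{k}{2}} (cq^k; q)_{n-k}\, \Phi^{(1)}[a; b, b'; cq^k; xq^k, yq^k].$$
   Context: Let $q$ be a complex number with $0<|q|<1$. For complex $z$ and integer $m\ge 0$, $(z;q)_m=\prod_{j=0}^{m-1}(1-zq^j)$, with $(z;q)_0=1$. For integers $0\le k\le n$, $\begin{bmatrix} n \\ k \end{bmatrix}=\frac{(q;q)_n}{(q;q)_k(q;q)_{n-k}}$ is the $q$-binomial coefficient, and $\binom{j}{2}=j(j-1)/2$. The $q$-Appell function $\Phi^{(1)}$ is $$\Phi^{(1)}[a; b, b'; c; x, y] = \sum_{m, n \geq 0} \frac{(a; q)_{m+n} (b; q)_m (b'; q)_n}{(q; q)_m (q; q)_n (c; q)_{m+n}} x^m y^n.$$ Identities are understood as identities of power series in $x,y$ (formal, or convergent for small $|x|,|y|$), with complex parameters chosen so that no denominator occurring vanishes. *)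

(* Defs.v *)
From HB Require Import structures.
From mathcomp Require Import all_boot all_order all_algebra.
From mathcomp Require Import reals.
From mathcomp Require Import complex.
Set Implicit Arguments. Unset Strict Implicit. Unset Printing Implicit Defensive.
Import Order.TTheory GRing.Theory Num.Theory.
Local Open Scope ring_scope.

Section Defs.
Variable F : fieldType.

Definition qpoch (q z : F) (m : nat) : F := \prod_(j < m) (1 - z * q ^+ j).

Definition qbinom (q : F) (n k : nat) : F :=
  qpoch q q n / (qpoch q q k * qpoch q q (n - k)).

(* A formal power series in x, y is represented by its coefficient
   function: (m, l) |-> coefficient of x^m y^l. *)
Definition fps2 := nat -> nat -> F.

Definition Phi1 (q a b b' c : F) : fps2 := fun m l =>
  qpoch q a (m + l) * qpoch q b m * qpoch q b' l
  / (qpoch q q m * qpoch q q l * qpoch q c (m + l)).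

(* the series G(x,y) := S(t x, t y) *)
Definition subst_scale (t : F) (S : fps2) : fps2 := fun m l => t ^+ (m + l) * S m l.

Definition fps_scale (s : F) (S : fps2) : fps2 := fun m l => s * S m l.
Definition fps_sum (n : nat) (S : nat -> fps2) : fps2 :=
  fun m l => \sum_(k < n.+1) S k m l.
End Defs.

(* Main.v *)
Require Import Defs.
From HB Require Import structures.
From mathcomp Require Import all_boot all_order all_algebra.
From mathcomp Require Import reals complex ring zify.
Import Order.TTheory GRing.Theory Num.Theory.
Local Open Scope ring_scope.
From Stdlib Require Import FunctionalExtensionality.

Section S.
Variable F : fieldType.
Implicit Types q z t w y : F.

Lemma qpoch0 q z : qpoch q z 0 = 1.
Proof. by rewrite /qpoch big_ord0. Qed.

Lemma qpochS q z m : qpoch q z m.+1 = qpoch q z m * (1 - z * q^+m).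
Proof. by rewrite /qpoch big_ord_recr. Qed.

Lemma qpochSl q z m : qpoch q z m.+1 = (1 - z) * qpoch q (z*q) m.
Proof.
rewrite /qpoch big_ord_recl expr0 mulr1; congr (_ * _).
by apply: eq_bigr => i _; rewrite lift0 exprS mulrA.
Qed.

Lemma qpochD q z a b : qpoch q z (a + b) = qpoch q z a * qpoch q (z * q^+a) b.
Proof.
elim: b => [|b IH]; first by rewrite addn0 qpoch0 mulr1.
by rewrite addnS !qpochS IH exprD !mulrA.
Qed.

Lemma qpoch_neq0 q z m : (forall i, z * q^+i != 1) -> qpoch q z m != 0.
Proof. by move=> h; apply/prodf_neq0 => i _; rewrite subr_eq0 eq_sym. Qed.

Variable q : F.
Hypothesis hq : forall m, qpoch q q m != 0.

Lemma qbinom_n0 n : qbinom q n 0 = 1.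
Proof. by rewrite /qbinom qpoch0 subn0 mul1r divff. Qed.

Lemma qbinom_nn n : qbinom q n n = 1.
Proof. by rewrite /qbinom subnn qpoch0 mulr1 divff. Qed.

Lemma qbinom_sym n k : (k <= n)%N -> qbinom q n (n - k) = qbinom q n k.
Proof. by move=> h; rewrite /qbinom subKn // [qpoch q q k * _]mulrC. Qed.

Lemma qbinom_pascal n k : (k < n)%N ->
  qbinom q n.+1 k.+1 = q^+k.+1 * qbinom q n k.+1 + qbinom q n k.
Proof.
move=> hk; rewrite /qbinom.
have [j ->] : exists j, n = (k.+1 + j)%N.
  by exists (n - k.+1)%N; rewrite subnKC.
move=> {hk}.
have e1 : ((k.+1 + j).+1 - k.+1 = j.+1)%N by lia.
have e2 : ((k.+1 + j) - k.+1 = j)%N by lia.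
have e3 : ((k.+1 + j) - k = j.+1)%N by lia.
rewrite e1 e2 e3.
have hk1 := hq k.+1; have hj1 := hq j.+1.
rewrite qpochS in hk1; rewrite qpochS in hj1.
move: hk1 hj1; rewrite !mulf_eq0 !negb_or => /andP[hk hk'] /andP[hj hj'].
rewrite (qpochS q q (k.+1 + j)) (qpochS q q k) (qpochS q q j).
rewrite exprD !exprS.
field.

by rewrite hk hj hk' hj'.
Qed.

Lemma pascal_sum n (G : nat -> F) :
  \sum_(0 <= k < n.+2) qbinom q n.+1 k * G k =
  \sum_(0 <= k < n.+1) q^+k * qbinom q n k * G k +
  \sum_(0 <= k < n.+1) qbinom q n k * G k.+1.
Proof.
rewrite big_nat_recl // big_nat_recr //= [in RHS]big_nat_recl //.
rewrite [X in _ = _ + X]big_nat_recr //=.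
have -> : \sum_(0 <= i < n) qbinom q n.+1 i.+1 * G i.+1 =
  \sum_(0 <= i < n) q ^+ i.+1 * qbinom q n i.+1 * G i.+1 +
  \sum_(0 <= i < n) qbinom q n i * G i.+1.
  rewrite -big_split /=; apply: eq_big_nat => i /andP[_ hi].
  by rewrite qbinom_pascal // mulrDl mulrA.
rewrite !qbinom_n0 !qbinom_nn expr0.
set A := \sum_(0 <= i < n) _; set B := \sum_(0 <= i < n) _.
ring.
Qed.

Lemma qbin_thm n y t :
  \sum_(0 <= k < n.+1) qbinom q n k * (y^+k * q^+'C(k,2) * t^+(n-k)) =
  \prod_(i < n) (t + y * q^+i).
Proof.
elim: n y => [|n IH] y.
  by rewrite big_nat1 big_ord0 qbinom_n0 !expr0 !mul1r.
rewrite pascal_sum.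
have -> : \sum_(0 <= k < n.+1) q ^+ k * qbinom q n k *
    (y ^+ k * q ^+ 'C(k, 2) * t ^+ (n.+1 - k)) =
  t * \sum_(0 <= k < n.+1) qbinom q n k * ((y*q) ^+ k * q ^+ 'C(k, 2) * t ^+ (n - k)).
  rewrite mulr_sumr; apply: eq_big_nat => k /andP[_ hk].
  rewrite subSn // exprS exprMn; ring.
have -> : \sum_(0 <= k < n.+1) qbinom q n k *
    (y ^+ k.+1 * q ^+ 'C(k.+1, 2) * t ^+ (n.+1 - k.+1)) =
  y * \sum_(0 <= k < n.+1) qbinom q n k * ((y*q) ^+ k * q ^+ 'C(k, 2) * t ^+ (n - k)).
  rewrite mulr_sumr; apply: eq_big_nat => k /andP[_ hk].
  rewrite subSS binS bin1 exprD exprS exprMn; ring.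
rewrite IH -mulrDl big_ord_recl expr0 mulr1; congr (_ * _).
by apply: eq_bigr => i _; rewrite lift0 exprS mulrA.
Qed.

Lemma qbin_thm_rev n y t :
  \sum_(0 <= k < n.+1) qbinom q n k * (y^+(n-k) * q^+'C(n-k,2) * t^+k) =
  \prod_(i < n) (t + y * q^+i).
Proof.
rewrite -qbin_thm big_nat_rev /= add0n.
apply: eq_big_nat => k /andP[_ hk].
by rewrite subSS qbinom_sym ?subKn // -ltnS.
Qed.

Lemma Tsum n w :
  \sum_(0 <= k < n.+1) qbinom q n k * (w^+k * q^+(2*'C(k,2)) * qpoch q (w*q^+k) (n-k)) = 1.
Proof.
elim: n w => [|n IH] w.
  by rewrite big_nat1 qbinom_n0 !expr0 qpoch0 !mul1r.
rewrite pascal_sum -(IH (w*q)) -big_split /=.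
apply: eq_big_nat => k /andP[_ hk].
rewrite subSn // subSS qpochSl binS bin1 mulnDr exprD.
have e1 : w * q ^+ k.+1 = w * q * q^+k by rewrite exprS mulrA.
have e2 : w * q ^+ k * q = w * q * q^+k by rewrite mulrAC.
rewrite e1 e2; set Q := qpoch _ _ _.
have e3 : forall m, q^+(2 * m)%N = q^+m * q^+m by move=> m; rewrite mul2n -addnn exprD.
rewrite !e3 exprS exprMn.
ring.
Qed.
End S.

Lemma Qprod (F : fieldType) (q d : F) n N : q != 0 -> d != 0 ->
  qpoch q (q/(d*q^+n)) n * qpoch q (d*q^+n) N =
  \prod_(i<n) (q^+N - q/(d*q^+n) * q^+i) * qpoch q d N.
Proof.
move=> q0 d0; elim: N => [|N IH].
  by rewrite !qpoch0 !mulr1 /qpoch; apply: eq_bigr => i _; rewrite ?expr0 ?mulr1 ?mul1r.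
rewrite !qpochS mulrA IH.
case: n IH => [|n] IH.
  by rewrite !big_ord0 expr0 mulr1 !mul1r.
rewrite big_ord_recr big_ord_recl /=.
have -> : \prod_(i<n) (q^+N.+1 - q / (d * q ^+ n.+1) * q^+(lift ord0 i)) =
   \prod_(i<n) (q * (q^+N - q / (d * q ^+ n.+1) * q^+i)).
  by apply: eq_bigr => i _; rewrite lift0 !exprS; ring.
rewrite big_split /= prodr_const card_ord.
set X := \prod_(i < n) _.
rewrite !exprS expr0.
have qn : q^+n != 0 by rewrite expf_neq0.
field.
by rewrite d0 q0 qn.
Qed.

Lemma Phi1E (F : fieldType) (q a b b' c : F) m l :
  Phi1 q a b b' c m l = (qpoch q a (m+l) * qpoch q b m * qpoch q b' l /
     (qpoch q q m * qpoch q q l)) * (qpoch q c (m+l))^-1.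
Proof. by rewrite /Phi1 invfM mulrA. Qed.

Theorem theorem5 (R : realType) (q a b b' c : R[i]) (n : nat) :
  0 < `|q| < 1 ->
  ((c != 0 -> (forall j : nat, c * q ^- n * q ^+ j != 1) ->
      qpoch q (q / c) n != 0 ->
    Phi1 q a b b' (c * q ^- n) =
    fps_scale (qpoch q (q / c) n)^-1
      (fps_sum n (fun k =>
         fps_scale (qbinom q n k * (- c) ^ (k%:Z - n%:Z) * q ^+ 'C(n.+1 - k, 2))
           (subst_scale (q ^+ k) (Phi1 q a b b' c)))))
  /\
  ((forall j : nat, c * q ^+ j != 1) ->
    Phi1 q a b b' (c * q ^+ n) =
    fps_sum n (fun k =>
       fps_scale (qbinom q n k * c ^+ k * q ^+ (2 * 'C(k, 2)) * qpoch q (c * q ^+ k) (n - k))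
         (subst_scale (q ^+ k) (Phi1 q a b b' (c * q ^+ k)))))).
Proof.
move=> /andP[q0' q1].
have q0 : q != 0 by rewrite -normr_gt0.
have hq : forall m, qpoch q q m != 0.
  move=> m; apply: qpoch_neq0 => i; rewrite -exprS; apply/negP => /eqP h.
  have : `|q ^+ i.+1| < 1 by rewrite normrX exprn_ilt1 // normr_ge0.
  by rewrite h normr1 ltxx.
split.
- move=> c0 hd hr.
  apply: functional_extensionality => m; apply: functional_extensionality => l.
  rewrite /fps_scale /fps_sum /subst_scale !Phi1E.
  set N := (m + l)%N.
  set P := (qpoch q a N * _ * _ / _).
  set d := c * q^-n.
  have d0 : d != 0 by rewrite mulf_neq0 // invr_neq0 // expf_neq0.
  have ec : c = d * q^+n by rewrite /d mulfVK // expf_neq0.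
  have hD : qpoch q d N != 0 by apply: qpoch_neq0.
  have hW : qpoch q c N != 0.
    apply: qpoch_neq0 => i; move: (hd (n+i)%N).
    by rewrite exprD mulrA mulfVK // expf_neq0.
  have hS : \sum_(k < n.+1) qbinom q n k * (-c)^(k%:Z - n%:Z) * q^+'C(n.+1-k,2) * (q^+k)^+N
        = \prod_(i<n) (q^+N - q/c * q^+i).
    have -> : \prod_(i<n) (q^+N - q/c*q^+i) = \prod_(i<n)(q^+N + -(q/c) * q^+i).
      by apply: eq_bigr => i _; rewrite mulNr.
    rewrite -qbin_thm_rev // big_mkord; apply: eq_bigr => [[k hk]] _ /=.
    have [j ej] : exists j, n = (k + j)%N by exists (n-k)%N; rewrite subnKC // -ltnS.
    rewrite ej.
    have e1 : ((k + j).+1 - k = j.+1)%N by lia.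
    have e2 : ((k + j) - k = j)%N by lia.
    have e3 : (k%:Z - (k+j)%:Z) = - (j%:Z) by rewrite PoszD opprD addrA subrr add0r.
    rewrite e1 e2 e3 -exprnN binS bin1 exprD exprAC.
    rewrite -mulrN -invrN exprMn exprVn.
    ring.
  have -> : \sum_(k < n.+1) qbinom q n k * (-c)^(k%:Z - n%:Z) * q^+'C(n.+1-k,2) *
        ((q^+k)^+N * (P * (qpoch q c N)^-1)) =
      (\sum_(k < n.+1) qbinom q n k * (-c)^(k%:Z - n%:Z) * q^+'C(n.+1-k,2) * (q^+k)^+N)
        * (P * (qpoch q c N)^-1).
    by rewrite mulr_suml; apply: eq_bigr => k _; rewrite !mulrA.
  rewrite hS.
  have hQ := @Qprod _ q d n N q0 d0.
  rewrite -ec in hQ.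
  have -> : \prod_(i<n) (q^+N - q/c * q^+i) = qpoch q (q/c) n * qpoch q c N / qpoch q d N.
    by rewrite hQ mulfK.
  field.
  by rewrite hr hW hD.
- move=> hc.
  apply: functional_extensionality => m; apply: functional_extensionality => l.
  rewrite /fps_scale /fps_sum /subst_scale !Phi1E.
  set N := (m + l)%N.
  set P := (qpoch q a N * _ * _ / _).
  rewrite -[LHS]mulr1 -(@Tsum _ q hq n (c*q^+N)) big_mkord mulr_sumr.
  apply: eq_bigr => [[k hk]] _ /=.
  have hD : qpoch q (c*q^+n) N != 0.
    by apply: qpoch_neq0 => i; rewrite -mulrA -exprD.
  have hWk : qpoch q (c*q^+k) N != 0.
    by apply: qpoch_neq0 => i; rewrite -mulrA -exprD.
  have E : qpoch q (c*q^+N*q^+k) (n-k) =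
      qpoch q (c*q^+k) (n-k) * qpoch q (c*q^+n) N / qpoch q (c*q^+k) N.
    have e1 := @qpochD _ q (c*q^+k) N (n-k).
    have e2 := @qpochD _ q (c*q^+k) (n-k) N.
    rewrite addnC e1 in e2.
    have e3 : c*q^+k*q^+(n-k) = c*q^+n by rewrite -mulrA -exprD subnKC.
    have e4 : c*q^+k*q^+N = c*q^+N*q^+k by rewrite mulrAC.
    rewrite e3 e4 in e2.
    by rewrite -e2 [X in X / _]mulrC mulfK.
  rewrite E exprMn exprAC.
  rewrite Phi1E -/N -/P.
  field.
  by rewrite hD hWk.
Qed.
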